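(* $V_{\mathcal J}=M_r$; that is, the subspace of $M_r$ spanned by all vectors $L_r^{i_1j_1}(m_1)\cdots L_r^{i_pj_p}(m_p)\mathbf 1$ ($p\ge 0$, $1\le i_q,j_q\le d$, $m_q\in\mathbb Z$) is all of $M_r$.
   Context: Fix an integer $d\ge 2$ and $r\in\mathbb{C}$. Let $\hat{\mathfrak h}$ be the complex Lie algebra with basis $\{v^i(m)\mid 1\le i\le d,\ m\in\mathbb{Z}\}\cup\{\mathbf c\}$ and bracket $[v^i(m),v^j(n)]=\delta_{m+n,0}\delta_{i,j}\,m\,\mathbf c$, $[\mathbf c,\hat{\mathfrak h}]=0$. In $A=U(\hat{\mathfrak h})/\langle \mathbf c-1\rangle$ let $v^{ij}(m,n)$ be the image of $v^i(m)v^j(n)$; then $v^{ij}(m,n)=v^{ji}(n,m)$ unless $i=j$ and $m=-n$, and $v^{ii}(m,-m)=v^{ii}(-m,m)+m$. Let $\mathcal B=\{v^{ii}(m,n)\mid 1\le i\le d,\ m\le n\}\cup\{v^{ij}(m,n)\mid 1\le i<j\le d,\ m,n\in\mathbb Z\}$; then $\mathcal B\cup\{1\}$ is linearly independent, $\mathcal L:=\mathrm{span}_{\mathbb C}\mathcal B\oplus\mathbb C\subset A$ contains every $v^{ij}(m,n)$ and is closed under $[x,y]=xy-yx$. With $\pi_1,\pi_2$ the projections of $\mathcal L$ onto $\mathrm{span}\,\mathcal B$ and onto $\mathbb C$, $[x,y]_r=\pi_1([x,y])+r\pi_2([x,y])$ is a Lie bracket on $\mathcal L$; call this Lie algebra $\mathcal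 L_r$. Let $\mathcal B_+=\{v^{ij}(m,n)\in\mathcal B\mid m\ge 0\text{ or }n\ge 0\}$, $\mathcal B_-=\{v^{ij}(m,n)\in\mathcal B\mid m,n<0\}$, $\mathcal L_r^+=\mathrm{span}\,\mathcal B_+\oplus\mathbb C$, and $M_r=U(\mathcal L_r)\otimes_{U(\mathcal L_r^+)}\mathbb C\mathbf 1$, where $\mathcal B_+$ acts by $0$ on $\mathbf 1$ and $s\in\mathbb C\subset\mathcal L_r$ acts by the scalar $s$. Define operators on $M_r$: $L_r^{ij}(m)=\frac12\sum_{h\in\mathbb Z}v^{ij}(m-h,h)$ if $i\ne j$ or $m\ne0$, and $L_r^{ii}(0)=\frac12 v^{ii}(0,0)+\sum_{h>0}v^{ii}(-h,h)$ (on each vector only finitely many terms are nonzero). $V_{\mathcal J}$ denotes the span described in the claim. *)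

(* Defs.v *)
From mathcomp Require Import all_boot all_algebra.
From mathcomp Require Import Rstruct complex.
Set Implicit Arguments. Unset Strict Implicit. Unset Printing Implicit Defensive.
Import GRing.Theory Num.Theory.
Local Open Scope ring_scope.

Definition CC : fieldType := (Rdefinitions.R)[i].

Section Defs.
Variable d : nat.

(* Generators of the vector space L_r: [None] is the element 1 of C ⊂ L_r,
   [Some (i,j,m,n)] is v^{ij}(m,n).  Indices 1..d are represented by 'I_d. *)
Definition gen := option ('I_d * 'I_d * int * int).

Definition validg (g : gen) : bool :=
  match g with
  | None => true
  | Some (i, j, m, n) => (i < j)%N || ((i == j) && (m <= n))
  end.

Definition in_Bplus (g : gen) : bool :=
  match g with
  | None => false
  | Some (i, j, m, n) => validg g && ((0 <= m) || (0 <= n))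
  end.

Definition word := seq gen.
Definition valid_word (u : word) : bool := all validg u.

(* Elements of the tensor algebra T(L_r) (formal linear combinations of words;
   finite support is imposed where needed). *)
Definition vec := word -> CC.

(* Expansion of an arbitrary v^{ij}(m,n) (an element of L) in the basis B ∪ {1}:
   v^{ij}(m,n) = v^{ji}(n,m), and v^{ii}(m,n) = v^{ii}(n,m) + δ_{m+n,0} m. *)
Definition vnorm (i j : 'I_d) (m n : int) : seq (CC * gen) :=
  if (i < j)%N then [:: (1, Some (i, j, m, n))]
  else if (j < i)%N then [:: (1, Some (j, i, n, m))]
  else if m <= n then [:: (1, Some (i, j, m, n))]
  else (1, Some (i, j, n, m)) :: (if m + n == 0 then [:: (m%:~R, None)] else [::]).

Definition scl (c : CC) (s : seq (CC * gen)) := map (fun p => (c * p.1, p.2)) s.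
Definition condl (b : bool) (s : seq (CC * gen)) := if b then s else [::].

(* The commutator [x,y] = xy - yx computed in A, expanded in B ∪ {1}. *)
Definition rawbr (x y : gen) : seq (CC * gen) :=
  match x, y with
  | Some (i, j, a, b), Some (k, l, c, e) =>
      condl ((j == k) && (b + c == 0)) (scl b%:~R (vnorm i l a e)) ++
      condl ((j == l) && (b + e == 0)) (scl b%:~R (vnorm i k a c)) ++
      condl ((i == k) && (a + c == 0)) (scl a%:~R (vnorm l j e b)) ++
      condl ((i == l) && (a + e == 0)) (scl a%:~R (vnorm k j c b))
  | _, _ => [::]
  end.

(* The bracket [x,y]_r = π1([x,y]) + r π2([x,y]). *)
Definition brr (r : CC) (x y : gen) : seq (CC * gen) :=
  map (fun p => if p.2 is None then (r * p.1, None) else p) (rawbr x y).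

Definition delta (u : word) : vec := fun w => if w == u then 1 else 0.

Definition lin (u : word) (s : seq (CC * gen)) (v : word) : vec :=
  fun w => \sum_(p <- s) p.1 * delta (u ++ p.2 :: v) w.

(* Generators of the subspace J of T(L_r) with M_r = T(L_r)/J:
   the two-sided ideal of U(L_r) relations, plus the left ideal generated by
   B_+ and by (1_L - 1). *)
Definition Jgen (r : CC) (t : vec) : Prop :=
  (exists u v x y, [/\ valid_word u, valid_word v, validg x, validg y &
     forall w, t w = delta (u ++ x :: y :: v) w - delta (u ++ y :: x :: v) w
                     - lin u (brr r x y) v w])
  \/ (exists u b, [/\ valid_word u, in_Bplus b & forall w, t w = delta (rcons u b) w])
  \/ (exists u, valid_word u /\ forall w, t w = delta (rcons u None) w - delta u w).

Definition InJ (r : CC) (t : vec) : Prop :=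
  exists (n : nat) (c : nat -> CC) (x : nat -> vec),
    (forall k, (k < n)%N -> Jgen r (x k)) /\
    forall w, t w = \sum_(k < n) c k * x k w.

Definition lmulg (g : gen) (t : vec) : vec :=
  fun w => match w with
           | g' :: w' => if g' == g then t w' else 0
           | [::] => 0
           end.

Definition vmul (i j : 'I_d) (m n : int) (t : vec) : vec :=
  fun w => \sum_(p <- vnorm i j m n) p.1 * lmulg p.2 t w.

(* Truncation at level N of the operator L_r^{ij}(m). *)
Definition Lop (N : nat) (q : 'I_d * 'I_d * int) (t : vec) : vec :=
  fun w =>
    match q with
    | (i, j, m) =>
      if (i == j) && (m == 0) then
        2^-1 * vmul i i 0 0 t w
        + \sum_(k < N) vmul i i (- (k.+1)%:Z) (k.+1)%:Z t w
      else
        2^-1 * \sum_(k < (2 * N).+1)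
                 vmul i j (m - (k%:Z - N%:Z)) (k%:Z - N%:Z) t w
    end.

(* LMono r qs u : the class of u in M_r equals
   L_r^{i_1 j_1}(m_1) ... L_r^{i_p j_p}(m_p) 1, where qs = [(i_1,j_1,m_1); ...].
   The infinite sum defining L_r^{ij}(m) is realized as the eventually constant
   (modulo J) value of its truncations. *)
Inductive LMono (r : CC) : seq ('I_d * 'I_d * int) -> vec -> Prop :=
| LMono0 u : InJ r (fun w => u w - delta [::] w) -> LMono r [::] u
| LMonoS q qs v u : LMono r qs v ->
    (exists N0 : nat, forall N, (N0 <= N)%N -> InJ r (fun w => u w - Lop N q v w)) ->
    LMono r (q :: qs) u.

End Defs.

(* Main.v *)
Require Import Defs.
From mathcomp Require Import all_boot all_order all_algebra zify ring.
From mathcomp Require Import Rstruct complex.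
From Stdlib Require Import FunctionalExtensionality.
Set Implicit Arguments. Unset Strict Implicit. Unset Printing Implicit Defensive.
Import Order.TTheory GRing.Theory Num.Theory.
Local Open Scope ring_scope.


Section P1.
Variable d : nat.
Variable r : CC.
Local Notation vec := (vec d).
Local Notation gen := (gen d).
Local Notation word := (word d).

Definition vadd (a b : vec) : vec := fun w => a w + b w.
Definition vscal (c : CC) (a : vec) : vec := fun w => c * a w.
Definition vzero : vec := fun _ => 0.

Inductive cl (P : vec -> Prop) : vec -> Prop :=
 | clB t : P t -> cl P t
 | cl0 : cl P vzero
 | clD a b : cl P a -> cl P b -> cl P (vadd a b)
 | clZ c a : cl P a -> cl P (vscal c a).

Lemma cl_ext P a b : cl P a -> (forall w, a w = b w) -> cl P b.
Proof. move=> h e. have -> : b = a by apply: functional_extensionality => w; rewrite e. done. Qed.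

Lemma cl_sub P a b : cl P a -> cl P b -> cl P (fun w => a w - b w).
Proof.
move=> ha hb; apply: cl_ext (clD ha (clZ (-1) hb)) _ => w.
by rewrite /vadd /vscal mulN1r.
Qed.

Lemma cl_add P a b : cl P a -> cl P b -> cl P (fun w => a w + b w).
Proof. by move=> ha hb; apply: cl_ext (clD ha hb) _. Qed.

Lemma cl_scale P c a : cl P a -> cl P (fun w => c * a w).
Proof. by move=> ha; apply: cl_ext (clZ c ha) _. Qed.

Lemma cl_zero P : cl P (fun _ => 0).
Proof. exact: (cl0 P). Qed.

Lemma cl_mono (P Q : vec -> Prop) t : (forall u, P u -> cl Q u) -> cl P t -> cl Q t.
Proof.
move=> hPQ; elim => [u Pu|||c a _ ha]; first exact: hPQ.
- exact: cl0.
- by move=> a b _ ha _ hb; exact: clD.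
- exact: clZ.
Qed.

Lemma cl_sum_seq P (I : eqType) (s : seq I) (F : I -> vec) (c : I -> CC) :
  (forall i, i \in s -> cl P (F i)) -> cl P (fun w => \sum_(i <- s) c i * F i w).
Proof.
elim: s => [|i s IH] h.
  by apply: cl_ext (cl0 P) _ => w; rewrite big_nil.
have h2 : forall j, j \in s -> cl P (F j).
  by move=> j js; apply: h; rewrite in_cons js orbT.
apply: cl_ext (cl_add (cl_scale (c i) (h i (mem_head _ _))) (IH h2)) _.
by move=> w /=; rewrite big_cons.
Qed.

Lemma cl_sum_ord P n (F : 'I_n -> vec) :
  (forall i, cl P (F i)) -> cl P (fun w => \sum_(i < n) F i w).
Proof.
elim: n F => [|n IH] F h.
  by apply: cl_ext (cl0 P) _ => w; rewrite big_ord0.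
apply: cl_ext (cl_add (IH (fun i => F (widen_ord (leqnSn n) i)) (fun i => h _)) (h ord_max)) _.
by move=> w; rewrite big_ord_recr.
Qed.

Definition JJ := cl (Jgen r).

Lemma InJ_JJ t : InJ r t -> JJ t.
Proof.
case=> n [c [x [hx ht]]]; rewrite /JJ.
have h1 : cl (Jgen r) (fun w => \sum_(k < n) vscal (c k) (x k) w).
  by apply: cl_sum_ord => k; apply: clZ; apply: clB; apply: hx.
by apply: cl_ext h1 _ => w; rewrite ht.
Qed.

Lemma JJ_InJ t : JJ t -> InJ r t.
Proof.
elim.
- move=> u hu; exists 1%N, (fun _ => 1), (fun _ => u); split.
    by move=> k _.
  by move=> w; rewrite big_ord1 mul1r.
- exists 0%N, (fun _ => 0), (fun _ => vzero); split; first by [].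
  by move=> w; rewrite big_ord0.
- move=> a b _ [n1 [c1 [x1 [h1 e1]]]] _ [n2 [c2 [x2 [h2 e2]]]].
  exists (n1 + n2)%N, (fun k => if (k < n1)%N then c1 k else c2 (k - n1)%N),
    (fun k => if (k < n1)%N then x1 k else x2 (k - n1)%N); split.
    move=> k hk; case: ifP => hk1; first exact: h1.
    apply: h2; lia.
  move=> w; rewrite /vadd e1 e2 big_split_ord /=; congr (_ + _).
    by apply: eq_bigr => k _; rewrite ltn_ord.
  apply: eq_bigr => k _; rewrite ltnNge leq_addr /=.
  by rewrite addKn.
- move=> c a _ [n [c1 [x1 [h1 e1]]]].
  exists n, (fun k => c * c1 k), x1; split; first exact: h1.
  by move=> w; rewrite /vscal e1 mulr_sumr; apply: eq_bigr => k _; rewrite mulrA.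
Qed.

Lemma delta_nil_cons (x : gen) X : delta (x :: X) [::] = 0.
Proof. by []. Qed.

Lemma delta_cons_cons (x y : gen) X w :
  delta (x :: X) (y :: w) = if y == x then delta X w else 0.
Proof. by rewrite /delta eqseq_cons; case: (y == x). Qed.

Lemma lmulg_delta (g : gen) u : lmulg g (delta u) = delta (g :: u).
Proof.
apply: functional_extensionality => -[|y w] //=.
by rewrite delta_cons_cons.
Qed.

Lemma lin_cons_nil (g : gen) u s v : lin (g :: u) s v [::] = 0.
Proof. by rewrite /lin big1 // => p _; rewrite mulr0. Qed.

Lemma lin_cons_cons (g y : gen) u s v w :
  lin (g :: u) s v (y :: w) = if y == g then lin u s v w else 0.
Proof.
rewrite /lin; case: eqP => [->|ne].
  by apply: eq_bigr => p _ /=; rewrite delta_cons_cons eqxx.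
by rewrite big1 // => p _ /=; rewrite delta_cons_cons; case: eqP => // _; rewrite mulr0.
Qed.

Lemma lmulg_lin (g : gen) u s v : lmulg g (lin u s v) = lin (g :: u) s v.
Proof.
apply: functional_extensionality => -[|y w] /=.
  by rewrite lin_cons_nil.
by rewrite lin_cons_cons.
Qed.

Lemma lmulg_vadd g a b : lmulg g (vadd a b) = vadd (lmulg g a) (lmulg g b).
Proof.
apply: functional_extensionality => -[|y w] /=; rewrite /vadd /=; first by rewrite addr0.
by case: ifP => //; rewrite addr0.
Qed.

Lemma lmulg_vscal g c a : lmulg g (vscal c a) = vscal c (lmulg g a).
Proof.
apply: functional_extensionality => -[|y w] /=; rewrite /vscal /=; first by rewrite mulr0.
by case: ifP => //; rewrite mulr0.
Qed.

Lemma lmulg_vzero g : lmulg g vzero = vzero.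
Proof. by apply: functional_extensionality => -[|y w] //=; case: ifP. Qed.

Lemma Jgen_lmulg (g : gen) t : validg g -> Jgen r t -> Jgen r (lmulg g t).
Proof.
move=> vg [[u [v [x [y [vu vv vx vy ht]]]]]|[[u [b [vu hb ht]]]|[u [vu ht]]]].
- left; exists (g :: u), v, x, y; split => //=; first by rewrite vg.
  move=> -[|z w] /=.
    by rewrite !delta_nil_cons lin_cons_nil !subr0.
  rewrite !delta_cons_cons lin_cons_cons; case: eqP => _; first by rewrite ht.
  by rewrite !subr0.
- right; left; exists (g :: u), b; split => //=; first by rewrite vg.
  move=> -[|z w] /=; first by rewrite delta_nil_cons.
  by rewrite delta_cons_cons ht.
- right; right; exists (g :: u); split => /=; first by rewrite vg.
  move=> -[|z w] /=; first by rewrite !delta_nil_cons subr0.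
  rewrite !delta_cons_cons; case: eqP => _; first by rewrite ht.
  by rewrite subr0.
Qed.

Lemma JJ_lmulg g t : validg g -> JJ t -> JJ (lmulg g t).
Proof.
move=> vg; elim.
- by move=> u hu; apply: clB; apply: Jgen_lmulg.
- by rewrite lmulg_vzero; apply: cl0.
- by move=> a b _ ha _ hb; rewrite lmulg_vadd; apply: clD.
- by move=> c a _ ha; rewrite lmulg_vscal; apply: clZ.
Qed.

Definition opL (s : seq (CC * gen)) (t : vec) : vec :=
  fun w => \sum_(p <- s) p.1 * lmulg p.2 t w.

Lemma JJ_opL s t : all (@validg d) [seq p.2 | p <- s] -> JJ t -> JJ (opL s t).
Proof.
move=> /allP hv ht; apply: cl_sum_seq => p ps; apply: JJ_lmulg => //.
by apply: hv; apply: map_f.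
Qed.

Lemma opL_delta s u : opL s (delta u) = lin [::] s u.
Proof.
apply: functional_extensionality => w; rewrite /opL /lin.
by apply: eq_bigr => p _; rewrite lmulg_delta.
Qed.

Lemma opL_vadd s a b : opL s (vadd a b) = vadd (opL s a) (opL s b).
Proof.
apply: functional_extensionality => w; rewrite /opL /vadd -big_split /=.
by apply: eq_bigr => p _; rewrite lmulg_vadd /vadd mulrDr.
Qed.

Lemma opL_vscal s c a : opL s (vscal c a) = vscal c (opL s a).
Proof.
apply: functional_extensionality => w; rewrite /opL /vscal mulr_sumr.
by apply: eq_bigr => p _; rewrite lmulg_vscal /vscal mulrCA.
Qed.

Lemma opL_vzero s : opL s vzero = vzero.
Proof.
apply: functional_extensionality => w; rewrite /opL /vzero big1 // => p _.
by rewrite lmulg_vzero /vzero mulr0.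
Qed.

Lemma opL_cat s1 s2 t : opL (s1 ++ s2) t = vadd (opL s1 t) (opL s2 t).
Proof. by apply: functional_extensionality => w; rewrite /opL /vadd big_cat. Qed.

Lemma opL_scl c s t : opL (scl c s) t = vscal c (opL s t).
Proof.
apply: functional_extensionality => w; rewrite /opL /vscal /scl big_map mulr_sumr.
by apply: eq_bigr => p _ /=; rewrite mulrA.
Qed.

Lemma opL_nil t : opL [::] t = vzero.
Proof. by apply: functional_extensionality => w; rewrite /opL big_nil. Qed.

Lemma vmul_opL i j m n t : vmul i j m n t = opL (vnorm i j m n) t.
Proof. by []. Qed.

Lemma lin_cat u s1 s2 v : lin u (s1 ++ s2) v = vadd (lin u s1 v) (lin u s2 v).
Proof. by apply: functional_extensionality => w; rewrite /lin /vadd big_cat. Qed.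

Lemma lin_scl u c s v : lin u (scl c s) v = vscal c (lin u s v).
Proof.
apply: functional_extensionality => w; rewrite /lin /vscal /scl big_map mulr_sumr.
by apply: eq_bigr => p _ /=; rewrite mulrA.
Qed.

Lemma lin_nil u v : lin u [::] v = vzero.
Proof. by apply: functional_extensionality => w; rewrite /lin big_nil. Qed.

Lemma lin_one u c (g : gen) v : lin u [:: (c, g)] v = vscal c (delta (u ++ g :: v)).
Proof. by apply: functional_extensionality => w; rewrite /lin big_seq1. Qed.

Lemma vnorm_lt (i j : 'I_d) m n : (i < j)%N -> vnorm i j m n = [:: (1, Some (i, j, m, n))].
Proof. by move=> h; rewrite /vnorm h. Qed.

Lemma vnorm_gt (i j : 'I_d) m n : (j < i)%N -> vnorm i j m n = [:: (1, Some (j, i, n, m))].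
Proof. by move=> h; rewrite /vnorm h; case: ifP => //; lia. Qed.

Lemma vnorm_le (i : 'I_d) m n : m <= n -> vnorm i i m n = [:: (1, Some (i, i, m, n))].
Proof. by move=> h; rewrite /vnorm ltnn h. Qed.

Lemma vnorm_gtn (i : 'I_d) m n : n < m ->
  vnorm i i m n = (1, Some (i, i, n, m)) :: (if m + n == 0 then [:: (m%:~R, None)] else [::]).
Proof. by move=> h; rewrite /vnorm ltnn; have -> : (m <= n) = false by lia. Qed.

Lemma ord_eq_nat (i j : 'I_d) : ~~ (i < j)%N -> ~~ (j < i)%N -> i = j.
Proof. by move=> h1 h2; apply: val_inj => /=; lia. Qed.

Lemma map_snd_scl c (s : seq (CC * gen)) : [seq p.2 | p <- scl c s] = [seq p.2 | p <- s].
Proof. by rewrite /scl -map_comp. Qed.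

Lemma vnorm_valid i j m n : all (@validg d) [seq p.2 | p <- vnorm i j m n].
Proof.
case: (ltnP i j) => hij; first by rewrite vnorm_lt //= hij.
case: (ltnP j i) => hji; first by rewrite vnorm_gt //= hji.
have e : i = j by apply: ord_eq_nat; rewrite -leqNgt.
subst j; case: (lerP m n) => hmn; first by rewrite vnorm_le //= eqxx hmn orbT.
rewrite vnorm_gtn //= eqxx (ltW hmn) orbT /=; by case: ifP.
Qed.

Lemma rawbr_valid (x y : gen) : all (@validg d) [seq p.2 | p <- rawbr x y].
Proof.
case: x => [[[[i j] a] b]|]; case: y => [[[[k l] c] e]|] //=.
rewrite !map_cat !all_cat /condl.
by repeat (case: ifP => _; rewrite ?map_snd_scl ?vnorm_valid //=).
Qed.

Lemma brr_valid (x y : gen) : all (@validg d) [seq p.2 | p <- brr r x y].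
Proof.
rewrite /brr -map_comp.
have -> : [seq (snd \o (fun p : CC * gen => if p.2 is None then (r * p.1, None) else p)) x0 | x0 <- rawbr x y]
   = [seq p.2 | p <- rawbr x y].
  by apply: eq_map => -[c [g|]].
exact: rawbr_valid.
Qed.

End P1.


Section P2.
Variable d : nat.
Variable r : CC.
Local Notation vec := (vec d).
Local Notation gen := (gen d).
Local Notation word := (word d).
Local Notation vzero := (@vzero d).

Definition lbase (q : 'I_d * 'I_d * int) : seq (CC * gen) :=
  let: (i, j, m) := q in
  if (i == j) && (m == 0) then scl 2^-1 (vnorm i i 0 0) else scl 2^-1 (vnorm i j m 0).

Definition lextra (N : nat) (q : 'I_d * 'I_d * int) : seq (CC * gen) :=
  let: (i, j, m) := q in
  if (i == j) && (m == 0) then vnorm i i (- (N.+1)%:Z) (N.+1)%:Z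
  else scl 2^-1 (vnorm i j (m + (N.+1)%:Z) (- (N.+1)%:Z) ++ vnorm i j (m - (N.+1)%:Z) (N.+1)%:Z).

Fixpoint lopl (N : nat) q : seq (CC * gen) :=
  if N is N'.+1 then lopl N' q ++ lextra N' q else lbase q.

Lemma Lop_0 q (t : vec) : Lop 0 q t = opL (lbase q) t.
Proof.
case: q => [[i j] m]; apply: functional_extensionality => w.
rewrite /Lop /lbase; case: ifP => _.
  by rewrite big_ord0 addr0 opL_scl /vscal vmul_opL.
rewrite big_ord1 opL_scl /vscal vmul_opL /=.
by rewrite subr0 subrr.
Qed.

Lemma Lop_step N q (t : vec) : Lop N.+1 q t = vadd (Lop N q t) (opL (lextra N q) t).
Proof.
case: q => [[i j] m]; apply: functional_extensionality => w.
rewrite /Lop /lextra /vadd; case: ifP => _.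
  by rewrite big_ord_recr /= -vmul_opL addrA.
rewrite opL_scl opL_cat /vscal /vadd -!vmul_opL.
have -> : (2 * N.+1).+1 = ((2 * N).+1).+2 by rewrite mulnS.
rewrite big_ord_recl big_ord_recr /=.
set A := \sum_(i0 < (2 * N).+1) _.
set B := \sum_(i0 < (2 * N).+1) _.
have -> : A = B.
  rewrite /A /B; apply: eq_bigr => k _ /=.
  by congr (vmul _ _ _ _ _ _); rewrite /bump /=; lia.
have e1 : m - (0%N%:Z - (N.+1)%:Z) = m + (N.+1)%:Z by lia.
have e2 : (0%N%:Z - (N.+1)%:Z) = - (N.+1)%:Z by lia.
have e3 : m - (((2 * N).+1).+1%:Z - (N.+1)%:Z) = m - (N.+1)%:Z by lia.
have e4 : (((2 * N).+1).+1%:Z - (N.+1)%:Z) = (N.+1)%:Z by lia.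
rewrite e1 e2.
have -> : (bump 0 (nat_of_ord (@ord_max (2 * N).+1))) = ((2 * N).+1).+1 by [].
rewrite e3 e4.
rewrite !mulrDr.
by rewrite addrCA.
Qed.

Lemma Lop_opL N q (t : vec) : Lop N q t = opL (lopl N q) t.
Proof.
elim: N => [|N IH]; first exact: Lop_0.
by rewrite Lop_step IH /= opL_cat.
Qed.

Lemma Lop_vadd N q (a b : vec) : Lop N q (vadd a b) = vadd (Lop N q a) (Lop N q b).
Proof. by rewrite !Lop_opL opL_vadd. Qed.
Lemma Lop_vscal N q c (a : vec) : Lop N q (vscal c a) = vscal c (Lop N q a).
Proof. by rewrite !Lop_opL opL_vscal. Qed.
Lemma Lop_vzero N (q : 'I_d * 'I_d * int) : Lop N q vzero = vzero.
Proof. by rewrite !Lop_opL opL_vzero. Qed.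

Lemma lopl_valid N q : all (@validg d) [seq p.2 | p <- lopl N q].
Proof.
case: q => [[i j] m]; elim: N => [|N IH] /=.
  by rewrite /lbase; case: ifP => _; rewrite map_snd_scl vnorm_valid.
rewrite map_cat all_cat IH /lextra; case: ifP => _; first exact: vnorm_valid.
by rewrite map_snd_scl map_cat all_cat !vnorm_valid.
Qed.

Lemma JJ_Lop N q (t : vec) : JJ r t -> JJ r (Lop N q t).
Proof. by move=> h; rewrite Lop_opL; apply: JJ_opL => //; exact: lopl_valid. Qed.

Definition bpn (g : gen) : bool := (g == None) || in_Bplus g.

Lemma vnorm_pos (i j : 'I_d) x y : (0 <= x) || (0 <= y) -> all bpn [seq p.2 | p <- vnorm i j x y].
Proof.
move=> h; have := vnorm_valid i j x y.
case: (ltnP i j) => hij.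
  by rewrite vnorm_lt //= /bpn /in_Bplus /= hij /=; move: h; case/orP=> ->; rewrite ?orbT.
case: (ltnP j i) => hji.
  by rewrite vnorm_gt //= /bpn /in_Bplus /= hji /=; move: h; case/orP=> ->; rewrite ?orbT.
have e : i = j by apply: ord_eq_nat; rewrite -leqNgt.
subst j; case: (lerP x y) => hxy.
  rewrite vnorm_le //= /bpn /in_Bplus /= => /andP[-> _] /=.
  by move: h; case/orP=> ->; rewrite ?orbT.
rewrite vnorm_gtn //= /bpn /in_Bplus /= => /andP[-> _] /=.
case: ifP => _ /=; by move: h; case/orP=> ->; rewrite ?orbT.
Qed.

Lemma lopl0_pos N (i j : 'I_d) : all bpn [seq p.2 | p <- lopl N (i, j, 0)].
Proof.
elim: N => [|N IH] /=.
  by rewrite /lbase; case: ifP => _; rewrite map_snd_scl vnorm_pos.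
rewrite map_cat all_cat IH /lextra; case: ifP => _; first by apply: vnorm_pos; lia.
by rewrite map_snd_scl map_cat all_cat !vnorm_pos //; lia.
Qed.

Lemma comm1 (p g : gen) u Y : valid_word u -> validg p -> validg g -> valid_word Y ->
  JJ r (fun w => delta (u ++ p :: g :: Y) w - delta (u ++ g :: p :: Y) w - lin u (brr r p g) Y w).
Proof. by move=> vu vp vg vY; apply: clB; left; exists u, Y, p, g; split. Qed.

Lemma brr_snd (x y : gen) : [seq p.2 | p <- brr r x y] = [seq p.2 | p <- rawbr x y].
Proof. by rewrite /brr -map_comp; apply: eq_map => -[c [g|]]. Qed.

Definition bnd (M : int) (g : gen) : bool :=
  if g is Some (_, _, a, b) then (- M <= a <= M) && (- M <= b <= M) else true.
Definition bigg (M : int) (g : gen) : bool :=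
  if g is Some (_, _, a, b) then (M < a) || (M < b) else false.

Lemma vnorm_big M (i j : 'I_d) x y : (M < x) || (M < y) -> (i != j) || (x <= y) || (x + y != 0) ->
  all (bigg M) [seq p.2 | p <- vnorm i j x y].
Proof.
move=> h h2.
case: (ltnP i j) => hij; first by rewrite vnorm_lt //= h.
case: (ltnP j i) => hji; first by rewrite vnorm_gt //= orbC h.
have e : i = j by apply: ord_eq_nat; rewrite -leqNgt.
subst j; case: (lerP x y) => hxy; first by rewrite vnorm_le //= h.
rewrite vnorm_gtn //= orbC h /=.
move: h2; rewrite eqxx /=; case: ifP => //; lia.
Qed.

Lemma condl_big M (b : bool) (s : seq (CC * gen)) : (b -> all (bigg M) [seq p.2 | p <- s]) ->
  all (bigg M) [seq p.2 | p <- condl b s].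
Proof. by rewrite /condl; case: b => // ->. Qed.

Lemma rawbr_big M (g y : gen) : bigg M g -> bnd M y -> all (bigg M) [seq p.2 | p <- rawbr g y].
Proof.
case: g => [[[[i j] a] b]|] //; case: y => [[[[k l] c] e]|] //= hb /andP[hc he].
rewrite !map_cat !all_cat; apply/and4P; split; apply: condl_big => /andP[_ /eqP h];
  rewrite map_snd_scl; (apply: vnorm_big; [lia | apply/orP; right; lia]).
Qed.

Lemma brr_big M (g y : gen) : bigg M g -> bnd M y -> all (bigg M) [seq p.2 | p <- brr r g y].
Proof. by rewrite brr_snd; exact: rawbr_big. Qed.

Lemma lin_nil_sum s (Y : word) :
  lin [::] s Y = (fun w => \sum_(p <- s) p.1 * delta (p.2 :: Y) w).
Proof. by []. Qed.

Lemma kill M (Y : word) : 0 <= M -> valid_word Y -> all (bnd M) Y ->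
  forall g, validg g -> bigg M g -> JJ r (delta (g :: Y)).
Proof.
move=> M0; elim: Y => [|y Y IH] vY bY g vg bg.
  apply: clB; right; left; exists [::], g; split => //.
  move: vg bg; rewrite /in_Bplus; case: g => [[[[i j] a] b]|] //= -> /=; lia.
move: vY bY => /= /andP[vy vY] /andP[hby bY].
have h1 := @comm1 g y [::] Y isT vg vy vY.
have h2 : JJ r (delta (y :: g :: Y)).
  by rewrite -lmulg_delta; apply: JJ_lmulg => //; apply: IH.
have h3 : JJ r (lin [::] (brr r g y) Y).
  rewrite lin_nil_sum; apply: cl_sum_seq => p ps; apply: IH => //.
    by move/allP: (brr_valid r g y); apply; apply: map_f.
  by move/allP: (brr_big bg hby); apply; apply: map_f.
apply: cl_ext (cl_add (cl_add h1 h2) h3) _ => w /=.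
by ring.
Qed.

Lemma bnd_exists (Y : word) : exists M, 0 <= M /\ all (bnd M) Y.
Proof.
elim: Y => [|y Y [M [M0 hM]]]; first by exists 0.
case: y => [[[[i j] a] b]|]; last by exists M.
exists (M + (absz a)%:Z + (absz b)%:Z); split; first lia.
rewrite /= (_ : (- (M + `|a|%N%:Z + `|b|%N%:Z) <= a <= M + `|a|%N%:Z + `|b|%N%:Z) = true); last by lia.
rewrite (_ : (- (M + `|a|%N%:Z + `|b|%N%:Z) <= b <= M + `|a|%N%:Z + `|b|%N%:Z) = true); last by lia.
apply/allP => g gY; move/allP: hM => /(_ g gY).
case: g {gY} => [[[[k l] x] z]|] //=; lia.
Qed.

Definition Stab (t : vec) : Prop :=
  forall q, exists N0, forall N, (N0 <= N)%N -> JJ r (fun w => Lop N q t w - Lop N0 q t w).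

Lemma lextra_big M N (i j : 'I_d) m : 0 <= M -> (absz M + absz m < N.+1)%N ->
  all (bigg M) [seq p.2 | p <- lextra N (i, j, m)].
Proof.
move=> M0 hN; rewrite /lextra; case: ifP => hd.
  by apply: vnorm_big; [lia | apply/orP; left; apply/orP; right; lia].
rewrite map_snd_scl map_cat all_cat; apply/andP; split; apply: vnorm_big; try lia;
  move: hd; case: (i == j) => //= hm; apply/orP; right; lia.
Qed.

Lemma Stab_delta (Y : word) : valid_word Y -> Stab (delta Y).
Proof.
move=> vY [[i j] m]; have [M [M0 hM]] := bnd_exists Y.
exists (absz M + absz m).+1 => N; elim: N => [|N IH] //.
rewrite leq_eqVlt => /orP[/eqP <-|hN].
  by apply: cl_ext (cl0 _) _ => w; rewrite /vzero subrr.
have h := IH hN; rewrite Lop_step.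
have hx : JJ r (opL (lextra N (i, j, m)) (delta Y)).
  rewrite opL_delta lin_nil_sum; apply: cl_sum_seq => p ps.
  have pv : validg p.2.
    have := lopl_valid N.+1 (i, j, m); rewrite /= map_cat all_cat => /andP[_ /allP]; apply.
    by apply: map_f.
  apply: (kill M0 vY hM pv).
  have := lextra_big i j M0 (_ : (absz M + absz m < N.+1)%N); move=> /(_ ltac:(lia)) /allP; apply.
  by apply: map_f.
by apply: cl_ext (cl_add h hx) _ => w; rewrite /vadd; ring.
Qed.

End P2.


Section P3.
Variable d : nat.
Variable r : CC.
Local Notation vec := (vec d).
Local Notation gen := (gen d).
Local Notation word := (word d).
Local Notation vzero := (@vzero d).

Definition FV := cl (fun t : vec => exists w, valid_word w /\ t = delta w).
Definition FVk (k : nat) := cl (fun t : vec => exists w, [/\ valid_word w, (size w <= k)%N & t = delta w]).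
Definition Good := cl (fun u : vec => (exists qs, LMono r qs u) \/ Jgen r u).

Lemma JJ_Good (t : vec) : JJ r t -> Good t.
Proof. by apply: cl_mono => u hu; apply: clB; right. Qed.

Lemma JJ_neg (a b : vec) : JJ r (fun w => a w - b w) -> JJ r (fun w => b w - a w).
Proof. by move=> h; apply: cl_ext (cl_scale (-1) h) _ => w; ring. Qed.

Lemma Good_J (a b : vec) : Good a -> JJ r (fun w => a w - b w) -> Good b.
Proof. by move=> ha hab; apply: cl_ext (cl_sub ha (JJ_Good hab)) _ => w; ring. Qed.

Lemma Good_J' (a b : vec) : Good a -> JJ r (fun w => b w - a w) -> Good b.
Proof. by move=> ha hab; apply: Good_J ha (JJ_neg hab). Qed.

Lemma vec_sub_eq (a b : vec) : (fun w => a w - b w) = vadd a (vscal (-1) b).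
Proof. by apply: functional_extensionality => w; rewrite /vadd /vscal; ring. Qed.

Lemma Lop_sub N q (a b : vec) : Lop N q (fun w => a w - b w) = (fun w => Lop N q a w - Lop N q b w).
Proof. by rewrite !vec_sub_eq Lop_vadd Lop_vscal. Qed.

Lemma FV_opL s (t : vec) : all (@validg d) [seq p.2 | p <- s] -> FV t -> FV (opL s t).
Proof.
move=> /allP hv; elim.
- move=> u [w [vw ->]]; rewrite opL_delta lin_nil_sum; apply: cl_sum_seq => p ps.
  apply: clB; exists (p.2 :: w); split => //=; rewrite vw andbT; apply: hv; exact: map_f.
- by rewrite opL_vzero; apply: cl0.
- by move=> a b _ ha _ hb; rewrite opL_vadd; apply: clD.
- by move=> c a _ ha; rewrite opL_vscal; apply: clZ.
Qed.

Lemma FV_Lop N q (t : vec) : FV t -> FV (Lop N q t).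
Proof. by move=> h; rewrite Lop_opL; apply: FV_opL => //; apply: lopl_valid. Qed.

Lemma Stab_J (t : vec) : JJ r t -> Stab r t.
Proof.
move=> h q; exists 0%N => N _.
by apply: cl_sub; apply: JJ_Lop.
Qed.

Lemma Stab_vadd (a b : vec) : Stab r a -> Stab r b -> Stab r (vadd a b).
Proof.
move=> ha hb q; have [Na HA] := ha q; have [Nb HB] := hb q.
exists (maxn Na Nb) => N hN.
have h1 := HA N (leq_trans (leq_maxl _ _) hN).
have h2 := HA (maxn Na Nb) (leq_maxl _ _).
have h3 := HB N (leq_trans (leq_maxr _ _) hN).
have h4 := HB (maxn Na Nb) (leq_maxr _ _).
apply: cl_ext (cl_sub (cl_add h1 h3) (cl_add h2 h4)) _ => w.
rewrite !Lop_vadd /vadd; ring.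
Qed.

Lemma Stab_vscal c (a : vec) : Stab r a -> Stab r (vscal c a).
Proof.
move=> ha q; have [Na HA] := ha q; exists Na => N hN.
apply: cl_ext (cl_scale c (HA N hN)) _ => w.
by rewrite !Lop_vscal /vscal; ring.
Qed.

Lemma Stab_vzero : Stab r vzero.
Proof. by move=> q; exists 0%N => N _; rewrite !Lop_vzero; apply: cl_ext (cl0 _) _ => w; rewrite /vzero subr0. Qed.

Lemma Stab_FV (t : vec) : FV t -> Stab r t.
Proof.
elim.
- by move=> u [w [vw ->]]; apply: Stab_delta.
- exact: Stab_vzero.
- by move=> a b _ ha _ hb; apply: Stab_vadd.
- by move=> c a _ ha; apply: Stab_vscal.
Qed.

Lemma Stab_eq (u f : vec) : Stab r f -> JJ r (fun w => u w - f w) -> Stab r u.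
Proof.
move=> hf huf q; have [N0 H] := hf q; exists N0 => N hN.
have h1 := H N hN.
have h2 := JJ_Lop N q huf; have h3 := JJ_Lop N0 q huf.
rewrite !Lop_sub in h2 h3.
apply: cl_ext (cl_add h1 (cl_sub h2 h3)) _ => w /=; ring.
Qed.

Lemma LMono_FV qs (u : vec) : LMono r qs u -> exists f, FV f /\ JJ r (fun w => u w - f w).
Proof.
elim => [u0 hu|q qs0 v u0 _ [f [hf hvf]] [N0 hN]].
  exists (delta [::]); split; last exact: InJ_JJ.
  by apply: clB; exists [::].
exists (Lop N0 q f); split; first exact: FV_Lop.
have h1 := InJ_JJ (hN N0 (leqnn _)).
have h2 := JJ_Lop N0 q hvf; rewrite Lop_sub in h2.
by apply: cl_ext (cl_add h1 h2) _ => w /=; ring.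
Qed.

Lemma Stab_LMono qs (u : vec) : LMono r qs u -> Stab r u.
Proof. by move=> /LMono_FV [f [hf huf]]; apply: Stab_eq (Stab_FV hf) huf. Qed.

Lemma LopGood (z : vec) : Good z -> forall q, exists N0, forall N, (N0 <= N)%N -> Good (Lop N q z).
Proof.
elim.
- move=> u [[qs hu]|hu] q.
    have [N0 HS] := Stab_LMono hu q; exists N0 => N hN.
    have hG : Good (Lop N0 q u).
      apply: clB; left; exists (q :: qs); apply: LMonoS hu _.
      by exists N0 => N' hN'; apply: JJ_InJ; apply: JJ_neg; apply: HS.
    by apply: Good_J hG (JJ_neg (HS N hN)).
  by exists 0%N => N _; apply: JJ_Good; apply: JJ_Lop; apply: clB.
- by move=> q; exists 0%N => N _; rewrite Lop_vzero; apply: cl0.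
- move=> a b _ ha _ hb q; have [Na HA] := ha q; have [Nb HB] := hb q.
  exists (maxn Na Nb) => N hN; rewrite Lop_vadd; apply: clD.
    by apply: HA; apply: leq_trans (leq_maxl _ _) hN.
  by apply: HB; apply: leq_trans (leq_maxr _ _) hN.
- move=> c a _ ha q; have [Na HA] := ha q; exists Na => N hN.
  by rewrite Lop_vscal; apply: clZ; apply: HA.
Qed.

Lemma None_move (Y u : word) : valid_word u -> valid_word Y ->
  JJ r (fun w => delta (u ++ None :: Y) w - delta (u ++ Y) w).
Proof.
elim: Y u => [|y Y IH] u vu vY.
  by apply: clB; right; right; exists u; split => // w; rewrite cats1 cats0.
move: vY => /= /andP[vy vY].
have h1 := @comm1 d r None y u Y vu isT vy vY.
have h2 := IH (rcons u y) (ltac:(by rewrite /valid_word all_rcons vy)) vY.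
rewrite !cat_rcons in h2.
apply: cl_ext (cl_add h1 h2) _ => w /=.
rewrite /brr /= lin_nil /vzero; ring.
Qed.

Lemma Bplus_valid (b : gen) : in_Bplus b -> validg b.
Proof. by case: b => [[[[i j] m] n]|] //= /andP[]. Qed.

Lemma FVk_mono k k' (f : vec) : (k <= k')%N -> FVk k f -> FVk k' f.
Proof.
move=> hk; apply: cl_mono => u [w [vw hw ->]]; apply: clB; exists w; split => //.
exact: leq_trans hw hk.
Qed.

Lemma FVk_lmulg k (y : gen) (f : vec) : validg y -> FVk k f -> FVk k.+1 (lmulg y f).
Proof.
move=> vy; elim.
- move=> u [w [vw hw ->]]; rewrite lmulg_delta; apply: clB; exists (y :: w); split => //=.
  by rewrite vy.
- by rewrite lmulg_vzero; apply: cl0.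
- by move=> a b _ ha _ hb; rewrite lmulg_vadd; apply: clD.
- by move=> c a _ ha; rewrite lmulg_vscal; apply: clZ.
Qed.

Lemma red (Y : word) : valid_word Y -> forall b, in_Bplus b ->
  exists f, FVk (size Y) f /\ JJ r (fun w => delta (b :: Y) w - f w).
Proof.
elim: Y => [|y Y IH] vY b hb.
  exists vzero; split; first exact: cl0.
  apply: clB; right; left; exists [::], b; split => // w.
  by rewrite /vzero subr0.
move: vY => /= /andP[vy vY]; have [f [hf hbf]] := IH vY b hb.
have vb := Bplus_valid hb.
exists (vadd (lmulg y f) (lin [::] (brr r b y) Y)); split.
  apply: clD; first exact: FVk_lmulg.
  rewrite lin_nil_sum; apply: cl_sum_seq => p ps; apply: clB; exists (p.2 :: Y); split => //=.
  rewrite vY andbT; move/allP: (brr_valid r b y); apply; exact: map_f.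
have h1 := @comm1 d r b y [::] Y isT vb vy vY.
have h2 := JJ_lmulg vy hbf.
have e : lmulg y (fun w => delta (b :: Y) w - f w) = fun w => delta (y :: b :: Y) w - lmulg y f w.
  rewrite vec_sub_eq lmulg_vadd lmulg_vscal lmulg_delta.
  by apply: functional_extensionality => w; rewrite /vadd /vscal; ring.
rewrite e in h2.
by apply: cl_ext (cl_add h1 h2) _ => w /=; rewrite /vadd; ring.
Qed.

Definition Claim (k : nat) := forall w : word, valid_word w -> (size w <= k)%N -> Good (delta w).

Lemma FVk_Good k (f : vec) : Claim k -> FVk k f -> Good f.
Proof. by move=> hC; apply: cl_mono => u [w [vw hw ->]]; apply: hC. Qed.

Definition SP (k : nat) (s : seq (CC * gen)) :=
  forall Y : word, valid_word Y -> (size Y <= k)%N -> Good (lin [::] s Y).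

Lemma SP_Bp k s : Claim k -> all (@bpn d) [seq p.2 | p <- s] -> SP k s.
Proof.
move=> hC /allP hs Y vY hY; rewrite lin_nil_sum; apply: cl_sum_seq => p ps.
have := hs _ (map_f _ ps); rewrite /bpn => /orP[/eqP ->|hb].
  have h := @None_move Y [::] isT vY.
  by apply: Good_J' (hC Y vY hY) h.
have [f [hf hbf]] := red vY hb.
apply: Good_J' (FVk_Good hC (FVk_mono hY hf)) hbf.
Qed.

End P3.


Section P4.
Variable d : nat.
Variable r : CC.
Local Notation vec := (vec d).
Local Notation gen := (gen d).
Local Notation word := (word d).
Local Notation vzero := (@vzero d).

Definition DG (A : seq (CC * gen)) (g : gen) (Y : word) : vec :=
  fun w => \sum_(a <- A) a.1 * lin [::] (brr r a.2 g) Y w.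

Definition DV (A B : seq (CC * gen)) (Y : word) : vec :=
  fun w => \sum_(b <- B) b.1 * DG A b.2 Y w.

Lemma opL_comm (A B : seq (CC * gen)) (Y : word) :
  all (@validg d) [seq p.2 | p <- A] -> all (@validg d) [seq p.2 | p <- B] -> valid_word Y ->
  JJ r (fun w => opL A (lin [::] B Y) w - opL B (lin [::] A Y) w - DV A B Y w).
Proof.
move=> /allP vA /allP vB vY.
have h : JJ r (fun w => \sum_(a <- A) a.1 * (fun w => \sum_(b <- B) b.1 *
   (fun w => delta (a.2 :: b.2 :: Y) w - delta (b.2 :: a.2 :: Y) w - lin [::] (brr r a.2 b.2) Y w) w) w).
  apply: cl_sum_seq => a aA; apply: cl_sum_seq => b bB.
  by apply: (@comm1 d r a.2 b.2 [::] Y isT) => //; [apply: vA | apply: vB]; apply: map_f.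
apply: cl_ext h _ => w /=.
have E1 : opL A (lin [::] B Y) w = \sum_(a <- A) \sum_(b <- B) a.1 * b.1 * delta (a.2 :: b.2 :: Y) w.
  rewrite /opL; apply: eq_bigr => a _; rewrite lmulg_lin /lin mulr_sumr.
  by apply: eq_bigr => b _; rewrite mulrA.
have E2 : opL B (lin [::] A Y) w = \sum_(a <- A) \sum_(b <- B) a.1 * b.1 * delta (b.2 :: a.2 :: Y) w.
  rewrite /opL exchange_big /=; apply: eq_bigr => b _; rewrite lmulg_lin /lin mulr_sumr.
  by apply: eq_bigr => a _ /=; rewrite mulrA [b.1 * a.1]mulrC.
have E3 : DV A B Y w = \sum_(a <- A) \sum_(b <- B) a.1 * b.1 * lin [::] (brr r a.2 b.2) Y w.
  rewrite /DV /DG exchange_big /=; apply: eq_bigr => b _; rewrite mulr_sumr.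
  by apply: eq_bigr => a _ /=; rewrite mulrA [b.1 * a.1]mulrC.
rewrite E1 E2 E3 -!sumrB; apply: eq_bigr => a _; rewrite -!sumrB mulr_sumr.
by apply: eq_bigr => b _; ring.
Qed.


Lemma bpn_red (A : seq (CC * gen)) (Y : word) : all (@bpn d) [seq p.2 | p <- A] -> valid_word Y ->
  exists f, FVk (size Y) f /\ JJ r (fun w => lin [::] A Y w - f w).
Proof.
elim: A => [|a A IH] /= hA vY.
  exists vzero; split; first exact: cl0.
  by rewrite lin_nil; apply: cl_ext (cl0 _) _ => w; rewrite /vzero subr0.
move: hA => /andP[ha hA]; have [f [hf hJ]] := IH hA vY.
have [fa [hfa hJa]] : exists fa, FVk (size Y) fa /\ JJ r (fun w => delta (a.2 :: Y) w - fa w).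
  move: ha; rewrite /bpn => /orP[/eqP ->|hb]; last exact: red.
  exists (delta Y); split; first by apply: clB; exists Y.
  exact: (@None_move d r Y [::] isT vY).
exists (vadd (vscal a.1 fa) f); split; first by apply: clD => //; apply: clZ.
apply: cl_ext (cl_add (cl_scale a.1 hJa) hJ) _ => w.
by rewrite /vadd /vscal /lin big_cons /=; ring.
Qed.

Lemma opL_FVk_Good k s (f : vec) : SP r k s -> FVk k f -> Good r (opL s f).
Proof.
move=> hs; elim.
- by move=> u [w [vw hw ->]]; rewrite opL_delta; apply: hs.
- by rewrite opL_vzero; apply: cl0.
- by move=> a b _ ha _ hb; rewrite opL_vadd; apply: clD.
- by move=> c a _ ha; rewrite opL_vscal; apply: clZ.
Qed.

Lemma opL_sub s (a b : vec) : opL s (fun w => a w - b w) = (fun w => opL s a w - opL s b w).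
Proof. by rewrite !vec_sub_eq opL_vadd opL_vscal. Qed.

Lemma SP_deriv k (i j : 'I_d) s s' : Claim d r k -> all (@validg d) [seq p.2 | p <- s] -> SP r k s ->
  (exists N1, forall N, (N1 <= N)%N -> forall Y, DV (lopl N (i, j, 0)) s Y = lin [::] s' Y) ->
  SP r k s'.
Proof.
move=> hC vs hs [N1 hN1] Y vY hY.
have G1 := hs Y vY hY.
have [N0 HN0] := LopGood G1 (i, j, 0).
have G2 := HN0 (maxn N0 N1) (leq_maxl _ _); rewrite Lop_opL in G2.
have C := opL_comm (lopl_valid (maxn N0 N1) (i, j, 0)) vs vY.
have [f [hf hJ]] := bpn_red (lopl0_pos (maxn N0 N1) i j) vY.
have G3 := opL_FVk_Good hs (FVk_mono hY hf).
have J2 := JJ_opL vs hJ; rewrite opL_sub in J2.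
have G4 := Good_J' G3 J2.
have G5 := Good_J (cl_sub G2 G4) C.
by rewrite -(hN1 (maxn N0 N1) (leq_maxr _ _) Y).
Qed.

End P4.


Section P5.
Variable d : nat.
Variable r : CC.
Local Notation vec := (vec d).
Local Notation gen := (gen d).
Local Notation word := (word d).
Local Notation vzero := (@vzero d).

Lemma ord_neq (k l : 'I_d) : (k < l)%N -> (k == l) = false.
Proof. by move=> h; apply/eqP => e; subst; rewrite ltnn in h. Qed.
Lemma ord_neq' (k l : 'I_d) : (k < l)%N -> (l == k) = false.
Proof. by move=> h; apply/eqP => e; subst; rewrite ltnn in h. Qed.

Lemma DG_cons a A (g : gen) Y : DG r (a :: A) g Y = vadd (vscal a.1 (lin [::] (brr r a.2 g) Y)) (DG r A g Y).
Proof. by apply: functional_extensionality => w; rewrite /DG big_cons. Qed.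
Lemma DG_nil (g : gen) Y : DG r [::] g Y = vzero.
Proof. by apply: functional_extensionality => w; rewrite /DG big_nil. Qed.
Lemma DG_cat A B (g : gen) Y : DG r (A ++ B) g Y = vadd (DG r A g Y) (DG r B g Y).
Proof. by apply: functional_extensionality => w; rewrite /DG big_cat. Qed.

Lemma vadd0 (a : vec) : vadd a vzero = a.
Proof. by apply: functional_extensionality => w; rewrite /vadd /vzero addr0. Qed.
Lemma vscal0 c : vscal c vzero = vzero.
Proof. by apply: functional_extensionality => w; rewrite /vscal /vzero mulr0. Qed.

Lemma DG_i (k l : 'I_d) a b (Y : word) N : (k < l)%N -> a < 0 -> b < 0 ->
  DG r (lopl N (k, k, 0)) (Some (k, l, a, b)) Y =
  if (absz a <= N)%N then vscal (- a%:~R) (delta (Some (k, l, a, b) :: Y)) else vzero.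
Proof.
move=> hkl ha hb; elim: N => [|N IH].
  rewrite /= /lbase eqxx /= vnorm_le // /= DG_cons DG_nil.
  rewrite /brr /rawbr /= eqxx (ord_neq hkl) /=.
  have -> : (0 + a == 0) = false by lia.
  have -> : (absz a <= 0)%N = false by lia.
  by rewrite /= lin_nil vscal0 vadd0.
rewrite /= DG_cat IH /lextra eqxx /= vnorm_le; last by lia.
rewrite DG_cons DG_nil /brr /rawbr /= eqxx (ord_neq hkl) /=.
have -> : (- (N.+1)%:Z + a == 0) = false by lia.
rewrite /= cats0.
case: (N.+1%:Z + a =P 0) => e /=.
  have -> : (absz a <= N)%N = false by lia.
  have -> : (absz a <= N.+1)%N = true by lia.
  rewrite vnorm_lt //= ?cats0 lin_one.
  have ea : a = - (N.+1)%:Z by lia.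
  apply: functional_extensionality => w; rewrite /vadd /vscal /vzero ea opprK; ring.
have -> : (absz a <= N.+1)%N = (absz a <= N)%N by lia.
by rewrite lin_nil vscal0 vadd0 vadd0.
Qed.

Lemma lopl_S N q : lopl N.+1 q = lopl N q ++ @lextra d N q.
Proof. by []. Qed.

Definition srt (c : 'I_d) (x y : int) : gen := if x <= y then Some (c, c, x, y) else Some (c, c, y, x).

Lemma vnorm_neg (c : 'I_d) x y : x < 0 -> y < 0 -> vnorm c c x y = [:: (1, srt c x y)].
Proof.
move=> hx hy; rewrite /srt; case: (lerP x y) => h; first by rewrite vnorm_le.
rewrite vnorm_gtn //; have -> : (x + y == 0) = false by lia.
done.
Qed.

Definition ifv (b : bool) (v : vec) : vec := if b then v else vzero.

Definition brf (p : CC * gen) : CC * gen := if p.2 is None then (r * p.1, None) else p.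
Lemma brr_brf (x y : gen) : brr r x y = map brf (rawbr x y).
Proof. by []. Qed.

Lemma brf_scl_vnorm c (cc : 'I_d) x y (Y : word) : x < 0 -> y < 0 ->
  lin [::] (map brf (scl c (vnorm cc cc x y))) Y = vscal c (delta (srt cc x y :: Y)).
Proof. by move=> hx hy; rewrite vnorm_neg //= /brf /srt; case: ifP => _ /=; rewrite lin_one mulr1. Qed.

Lemma DG_ii (k l : 'I_d) a b (Y : word) N : (k < l)%N -> a < 0 -> b < 0 ->
  DG r (lopl N (k, l, 0)) (Some (k, l, a, b)) Y =
  vadd (ifv (absz a <= N)%N (vscal (2^-1 * - a%:~R) (delta (srt l b a :: Y))))
       (ifv (absz b <= N)%N (vscal (2^-1 * - b%:~R) (delta (srt k b a :: Y)))).
Proof.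
move=> hkl ha hb; elim: N => [|N IH].
  rewrite /= /lbase (ord_neq hkl) /= vnorm_lt // /= DG_cons DG_nil.
  rewrite brr_brf /rawbr /= eqxx (ord_neq hkl) (ord_neq' hkl) /=.
  have -> : (0 + a == 0) = false by lia.
  have -> : (0 + b == 0) = false by lia.
  have -> : (absz a <= 0)%N = false by lia.
  have -> : (absz b <= 0)%N = false by lia.
  by rewrite eqxx /= lin_nil vscal0 /ifv !vadd0.
rewrite lopl_S DG_cat IH /lextra (ord_neq hkl) /= !(@vnorm_lt d k l _ _ hkl) /=.
rewrite !DG_cons DG_nil !brr_brf /rawbr /= eqxx (ord_neq hkl) (ord_neq' hkl) /=.
have -> : (- (N.+1)%:Z + b == 0) = false by lia.
have -> : (0 - (N.+1)%:Z + a == 0) = false by lia.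
rewrite eqxx /= ?cats0 ?add0r ?sub0r /ifv.
case: (N.+1%:Z + a =P 0) => e1; case: (N.+1%:Z + b =P 0) => e2 /=.
- have ea : a = - (N.+1)%:Z by lia.
  have eb : b = - (N.+1)%:Z by lia.
  subst a b.
  have -> : (absz (- (N.+1)%:Z) <= N)%N = false by lia.
  have -> : (absz (- (N.+1)%:Z) <= N.+1)%N = true by lia.
  rewrite !brf_scl_vnorm //.
  by apply: functional_extensionality => w; rewrite /vadd /vscal /vzero; ring.
- have ea : a = - (N.+1)%:Z by lia.
  subst a.
  have -> : (absz (- (N.+1)%:Z) <= N)%N = false by lia.
  have -> : (absz (- (N.+1)%:Z) <= N.+1)%N = true by lia.
  have -> : (absz b <= N.+1)%N = (absz b <= N)%N by lia.
  rewrite !brf_scl_vnorm // lin_nil.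
  by case: (absz b <= N)%N; apply: functional_extensionality => w; rewrite /vadd /vscal /vzero; ring.
- have eb : b = - (N.+1)%:Z by lia.
  subst b.
  have -> : (absz (- (N.+1)%:Z) <= N)%N = false by lia.
  have -> : (absz (- (N.+1)%:Z) <= N.+1)%N = true by lia.
  have -> : (absz a <= N.+1)%N = (absz a <= N)%N by lia.
  rewrite !brf_scl_vnorm // lin_nil.
  by case: (absz a <= N)%N; apply: functional_extensionality => w; rewrite /vadd /vscal /vzero; ring.
- have -> : (absz a <= N.+1)%N = (absz a <= N)%N by lia.
  have -> : (absz b <= N.+1)%N = (absz b <= N)%N by lia.
  rewrite !lin_nil.
  by case: (absz a <= N)%N; case: (absz b <= N)%N;
    apply: functional_extensionality => w; rewrite /vadd /vscal /vzero; ring.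
Qed.

Lemma srt_le (c : 'I_d) x y : x <= y -> srt c x y = Some (c, c, x, y).
Proof. by move=> h; rewrite /srt h. Qed.
Lemma srt_ge (c : 'I_d) x y : x <= y -> srt c y x = Some (c, c, x, y).
Proof. by move=> h; rewrite /srt; case: ifP => // h2; have -> : x = y by lia. Qed.

Lemma DG_iii (j k : 'I_d) c e (Y : word) N : c <= e -> e < 0 ->
  DG r (lopl N (j, j, 0)) (Some (k, k, c, e)) Y =
  if j == k then
    vadd (ifv (absz c <= N)%N (vscal (- c%:~R) (delta (Some (k, k, c, e) :: Y))))
         (ifv (absz e <= N)%N (vscal (- e%:~R) (delta (Some (k, k, c, e) :: Y))))
  else vzero.
Proof.
move=> hce he; elim: N => [|N IH].
  rewrite /= /lbase eqxx /= vnorm_le // /= DG_cons DG_nil.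
  rewrite brr_brf /rawbr /=.
  have -> : (0 + c == 0) = false by lia.
  have -> : (0 + e == 0) = false by lia.
  have -> : (absz c <= 0)%N = false by lia.
  have -> : (absz e <= 0)%N = false by lia.
  rewrite !andbF /condl /= lin_nil vscal0 /ifv /=.
  by case: (j == k) => //; apply: functional_extensionality => w; rewrite /vadd /vzero addr0.
rewrite lopl_S DG_cat IH /lextra eqxx /= vnorm_le; last by lia.
rewrite DG_cons DG_nil brr_brf /rawbr /=.
have -> : (- (N.+1)%:Z + c == 0) = false by lia.
have -> : (- (N.+1)%:Z + e == 0) = false by lia.
rewrite !andbF /= ?cats0 /ifv.
case: (j =P k) => hjk; last first.
  by rewrite /= lin_nil vscal0 !vadd0.
subst j; rewrite ?eqxx /=.
case: (N.+1%:Z + c =P 0) => e1; case: (N.+1%:Z + e =P 0) => e2 /=.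
- have ea : c = - (N.+1)%:Z by lia.
  have eb : e = - (N.+1)%:Z by lia.
  subst c e.
  have -> : (absz (- (N.+1)%:Z) <= N)%N = false by lia.
  have -> : (absz (- (N.+1)%:Z) <= N.+1)%N = true by lia.
  rewrite ?cats0 ?map_cat ?lin_cat !brf_scl_vnorm // srt_le //.
  by apply: functional_extensionality => w; rewrite /vadd /vscal /vzero; ring.
- have ea : c = - (N.+1)%:Z by lia.
  subst c.
  have -> : (absz (- (N.+1)%:Z) <= N)%N = false by lia.
  have -> : (absz (- (N.+1)%:Z) <= N.+1)%N = true by lia.
  have -> : (absz e <= N.+1)%N = (absz e <= N)%N by lia.
  rewrite ?cats0 ?map_cat ?lin_cat !brf_scl_vnorm // srt_le // ?lin_nil.
  by case: (absz e <= N)%N; apply: functional_extensionality => w; rewrite /vadd /vscal /vzero; ring.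
- have eb : e = - (N.+1)%:Z by lia.
  subst e.
  have -> : (absz (- (N.+1)%:Z) <= N)%N = false by lia.
  have -> : (absz (- (N.+1)%:Z) <= N.+1)%N = true by lia.
  have -> : (absz c <= N.+1)%N = (absz c <= N)%N by lia.
  rewrite ?cats0 ?map_cat ?lin_cat !brf_scl_vnorm //; last by lia.
  rewrite srt_ge // ?lin_nil.
  by case: (absz c <= N)%N; apply: functional_extensionality => w; rewrite /vadd /vscal /vzero; ring.
- have -> : (absz c <= N.+1)%N = (absz c <= N)%N by lia.
  have -> : (absz e <= N.+1)%N = (absz e <= N)%N by lia.
  rewrite ?cats0 ?map_cat ?lin_cat ?lin_nil.
  by case: (absz c <= N)%N; case: (absz e <= N)%N;
    apply: functional_extensionality => w; rewrite /vadd /vscal /vzero; ring.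
Qed.

End P5.

Section P6.
Variable d : nat.
Variable r : CC.
Local Notation vec := (vec d).
Local Notation gen := (gen d).
Local Notation word := (word d).
Local Notation vzero := (@vzero d).

Lemma SP_app k (s1 s2 : seq (CC * gen)) : SP r k s1 -> SP r k s2 -> SP r k (s1 ++ s2).
Proof. by move=> h1 h2 Y vY hY; rewrite lin_cat; apply: clD; [apply: h1|apply: h2]. Qed.

Lemma SP_scl k c (s : seq (CC * gen)) : SP r k s -> SP r k (scl c s).
Proof. by move=> h Y vY hY; rewrite lin_scl; apply: clZ; apply: h. Qed.

Lemma SP_ext k (s s' : seq (CC * gen)) : SP r k s -> (forall Y : word, lin [::] s Y = lin [::] s' Y) -> SP r k s'.
Proof. by move=> h e Y vY hY; rewrite -e; apply: h. Qed.

Lemma arith1 (A B X1 X2 : CC) : A - B + X2 = A + (X1 + X2) - (B + X1).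
Proof. ring. Qed.

Lemma lin2 (a b : CC * gen) (Y : word) w : lin [::] [:: a; b] Y w = lin [::] [:: a] Y w + lin [::] [:: b] Y w.
Proof. by rewrite /lin !big_cons !big_nil !addr0. Qed.

Definition gneg (k1 l1 : 'I_d) m (j : nat) : gen := Some (k1, l1, m + (j.+1)%:Z, - (j.+1)%:Z).
Definition negsN (k1 l1 : 'I_d) m N := [seq (2^-1 : CC, gneg k1 l1 m j) | j <- iota 0 N].

Lemma negsN_S (k1 l1 : 'I_d) m N : negsN k1 l1 m N.+1 = negsN k1 l1 m N ++ [:: (2^-1, gneg k1 l1 m N)].
Proof. by rewrite /negsN -[N.+1]addn1 iotaD map_cat. Qed.

Lemma negs_rel k (k1 l1 : 'I_d) m (Y : word) N : Claim d r k -> (k1 < l1)%N -> m < 0 ->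
  valid_word Y -> (size Y <= k)%N ->
  Good r (fun w => lin [::] (lopl N (k1, l1, m)) Y w - lin [::] (negsN k1 l1 m (minn N (absz m).-1)) Y w).
Proof.
move=> hC hkl hm vY hY; elim: N => [|N IH].
  rewrite /= /lbase (ord_neq hkl) /= min0n /negsN /= lin_nil.
  have h : SP r k (scl 2^-1 (vnorm k1 l1 m 0)).
    by apply: SP_Bp => //; rewrite map_snd_scl; apply: vnorm_pos; lia.
  by apply: cl_ext (h Y vY hY) _ => w; rewrite /vzero subr0.
rewrite lopl_S lin_cat /lextra (ord_neq hkl) /= !(@vnorm_lt d k1 l1 _ _ hkl) /=.
case: (ltnP N (absz m).-1) => hN.
  have -> : minn N.+1 (absz m).-1 = (minn N (absz m).-1).+1 by lia.
  have -> : minn N (absz m).-1 = N by lia.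
  rewrite negsN_S lin_cat.
  have h : SP r k [:: (2^-1 * 1, Some (k1, l1, m - (N.+1)%:Z, (N.+1)%:Z))].
    apply: SP_Bp => //=; rewrite /bpn /in_Bplus /= hkl /=; lia.
  have := cl_add IH (h Y vY hY).
  have -> : minn N (absz m).-1 = N by lia.
  move=> H; apply: cl_ext H _ => w.
  rewrite /vadd lin2 /gneg mulr1; apply: arith1.
have -> : minn N.+1 (absz m).-1 = minn N (absz m).-1 by lia.
have h : SP r k [:: (2^-1 * 1, Some (k1, l1, m + (N.+1)%:Z, - (N.+1)%:Z));
                   (2^-1 * 1, Some (k1, l1, m - (N.+1)%:Z, (N.+1)%:Z))].
  apply: SP_Bp => //=; rewrite /bpn /in_Bplus /= hkl /=; apply/andP; split; lia.
have := cl_add IH (h Y vY hY); move=> H; apply: cl_ext H _ => w.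
by rewrite /vadd addrAC.
Qed.

Lemma SP_negs k (k1 l1 : 'I_d) m : Claim d r k -> (k1 < l1)%N -> m < 0 ->
  SP r k (negsN k1 l1 m (absz m).-1).
Proof.
move=> hC hkl hm Y vY hY.
have G := hC Y vY hY.
have [N0 HN0] := LopGood G (k1, l1, m).
have G2 := HN0 (maxn N0 (absz m).-1) (leq_maxl _ _).
rewrite Lop_opL opL_delta in G2.
have R := negs_rel (maxn N0 (absz m).-1) hC hkl hm vY hY.
rewrite (_ : minn (maxn N0 (absz m).-1) (absz m).-1 = (absz m).-1) in R; last by lia.
by apply: cl_ext (cl_sub G2 R) _ => w /=; rewrite opprB addrC subrK.
Qed.

End P6.


Lemma intr_neq0_CC (a : int) : a != 0 -> a%:~R != 0 :> CC.
Proof. move=> h; have : a%:~R != 0 :> (Rdefinitions.R)[i] by rewrite intr_eq0. done. Qed.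

Lemma two_neq0_CC : (2 : CC) != 0.
Proof. have : (2%:R : (Rdefinitions.R)[i]) != 0 by rewrite pnatr_eq0. done. Qed.

Section P7.
Variable d : nat.
Variable r : CC.
Local Notation vec := (vec d).
Local Notation gen := (gen d).
Local Notation word := (word d).
Local Notation vzero := (@vzero d).

Definition idx1 (g : gen) : int := if g is Some (_, _, x, _) then x else 0.
Definition mixedneg (k1 l1 : 'I_d) (g : gen) : bool :=
  if g is Some (i, j, x, y) then [&& i == k1, j == l1, x < 0 & y < 0] else false.
Definition mapc (f : gen -> CC) (s : seq (CC * gen)) := [seq (p.1 * f p.2, p.2) | p <- s].

Lemma lin_mapc f s (Y : word) w :
  lin [::] (mapc f s) Y w = \sum_(p <- s) p.1 * f p.2 * delta (p.2 :: Y) w.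
Proof. by rewrite /lin /mapc big_map. Qed.

Lemma map_snd_mapc f s : [seq p.2 | p <- mapc f s] = [seq p.2 | p <- s].
Proof. by rewrite /mapc -map_comp. Qed.

Lemma SP_D1 k (k1 l1 : 'I_d) s : Claim d r k -> (k1 < l1)%N ->
  all (mixedneg k1 l1) [seq p.2 | p <- s] -> SP r k s ->
  SP r k (mapc (fun g => - (idx1 g)%:~R) s).
Proof.
move=> hC hkl /allP hs hSP.
apply: (SP_deriv (i := k1) (j := k1) hC _ hSP).
  apply/allP => g /hs; case: g => [[[[i j] x] y]|] //= /and4P[/eqP -> /eqP -> _ _].
  by rewrite hkl.
exists (\max_(p <- s) absz (idx1 p.2)) => N hN Y.
apply: functional_extensionality => w; rewrite /DV lin_mapc; apply: eq_big_seq => p ps.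
have := hs _ (map_f _ ps); case: p ps => c [[[[i j] x] y]|] ps //= /and4P[/eqP ei /eqP ej hx hy].
subst i j; rewrite DG_i //.
have -> : (absz x <= N)%N.
  apply: leq_trans hN.
  exact: (@leq_bigmax_seq _ s predT (fun p : CC * gen => absz (idx1 p.2)) _ ps isT).
by rewrite /vscal mulrA.
Qed.

Lemma SP_poly k (k1 l1 : 'I_d) s (A : seq int) : Claim d r k -> (k1 < l1)%N ->
  all (mixedneg k1 l1) [seq p.2 | p <- s] -> SP r k s ->
  SP r k (mapc (fun g => \prod_(x <- A) (x%:~R - (idx1 g)%:~R)) s).
Proof.
move=> hC hkl hs hSP; elim: A => [|x A IH].
  apply: SP_ext hSP _ => Y; apply: functional_extensionality => w.
  by rewrite lin_mapc /lin; apply: eq_bigr => p _; rewrite big_nil mulr1.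
have hs' := hs; rewrite -(map_snd_mapc (fun g => \prod_(x <- A) (x%:~R - (idx1 g)%:~R))) in hs'.
have h1 := SP_D1 hC hkl hs' IH.
have h2 := SP_scl x%:~R IH.
apply: SP_ext (SP_app h1 h2) _ => Y; apply: functional_extensionality => w.
rewrite lin_cat lin_scl /vadd /vscal !lin_mapc /mapc big_map mulr_sumr -big_split /=.
apply: eq_bigr => p _; rewrite big_cons; ring.
Qed.

Lemma mixed_SP k (k1 l1 : 'I_d) a b : Claim d r k -> (k1 < l1)%N -> a < 0 -> b < 0 ->
  SP r k [:: (1, Some (k1, l1, a, b))].
Proof.
move=> hC hkl ha hb.
have hm : a + b < 0 by lia.
have hs := SP_negs hC hkl hm.
have hmix : all (mixedneg k1 l1) [seq p.2 | p <- negsN k1 l1 (a + b) (absz (a + b)).-1].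
  apply/allP => g /mapP [p /mapP [j jin ->] ->] /=.
  rewrite mem_iota in jin; rewrite /gneg /= !eqxx /=; apply/andP; split; lia.
set A := [seq (a + b) + (j.+1)%:Z | j <- iota 0 (absz (a + b)).-1 & j != (absz b).-1].
have H := SP_poly A hC hkl hmix hs.
set c : CC := 2^-1 * \prod_(x <- A) (x%:~R - a%:~R).
have hc : c != 0.
  rewrite /c mulf_neq0 //; first by rewrite invr_eq0 two_neq0_CC.
  rewrite prodf_seq_neq0; apply/allP => x /mapP [j]; rewrite mem_filter mem_iota => /andP [hj jin] ->.
  by rewrite /= -intrB; apply: intr_neq0_CC; lia.
have H2 : SP r k [:: (c, Some (k1, l1, a, b))].
  apply: SP_ext H _ => Y; apply: functional_extensionality => w.
  rewrite lin_mapc /negsN big_map lin_one /vscal.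
  rewrite (bigD1_seq (absz b).-1) /=; last exact: iota_uniq; last by rewrite mem_iota; lia.
  rewrite [X in _ + X = _]big1_seq ?addr0.
    have eg : gneg k1 l1 (a + b) (absz b).-1 = Some (k1, l1, a, b).
      by rewrite /gneg; congr (Some (_, _, _, _)); lia.
    have ea : a + b + ((absz b).-1.+1)%:Z = a by lia.
    by rewrite eg ea /c.
  move=> j /andP [hj jin]; rewrite mem_iota in jin.
  have -> : \prod_(x <- A) (x%:~R - (idx1 (gneg k1 l1 (a + b) j))%:~R) = 0 :> CC.
    apply/eqP; rewrite prodf_seq_eq0; apply/hasP; exists (a + b + (j.+1)%:Z).
      by apply: map_f; rewrite mem_filter hj mem_iota.
    by rewrite /= subrr.
  by rewrite mulr0 mul0r.
apply: SP_ext (SP_scl c^-1 H2) _ => Y.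
by rewrite /scl /= mulVf.
Qed.

End P7.


Section P8.
Variable d : nat.
Variable r : CC.
Local Notation vec := (vec d).
Local Notation gen := (gen d).
Local Notation word := (word d).
Local Notation vzero := (@vzero d).

Lemma partner (j : 'I_d) : (2 <= d)%N -> exists k1 l1 : 'I_d, (k1 < l1)%N /\ (j = k1 \/ j = l1).
Proof.
move=> hd.
have h0 : (0 < d)%N by lia.
have h1 : (1 < d)%N by lia.
case: (j =P Ordinal h0) => e.
  by exists (Ordinal h0), (Ordinal h1); split => //; left.
exists (Ordinal h0), j; split; last by right.
rewrite /=; case: (posnP j) => // hj; case: e; apply: val_inj => /=; exact: hj.
Qed.

Lemma diag_SP k (j : 'I_d) c e : Claim d r k -> (2 <= d)%N -> c <= e -> e < 0 ->
  SP r k [:: (1, Some (j, j, c, e))].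
Proof.
move=> hC hd hce he.
have [k1 [l1 [hkl hj]]] := partner j hd.
have H1 := mixed_SP hC hkl (_ : c < 0) he; move/(_ ltac:(lia)) in H1.
have H2 : SP r k [:: (2^-1 * - c%:~R, Some (l1, l1, c, e)); (2^-1 * - e%:~R, Some (k1, k1, c, e))].
  apply: (SP_deriv (i := k1) (j := l1) hC _ H1); first by rewrite /= hkl.
  exists (absz c + absz e)%N => N hN Y; apply: functional_extensionality => w.
  rewrite /DV big_cons big_nil /= DG_ii //; last by lia.
  rewrite !srt_ge //.
  have -> : (absz c <= N)%N by lia.
  have -> : (absz e <= N)%N by lia.
  by rewrite /ifv /vadd /vscal lin2 !lin_one /vscal mul1r addr0.
set coef : CC := if j == k1 then 2^-1 * - e%:~R * (- c%:~R - e%:~R) else 2^-1 * - c%:~R * (- c%:~R - e%:~R).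
have H3 : SP r k [:: (coef, Some (j, j, c, e))].
  apply: (SP_deriv (i := j) (j := j) hC _ H2).
    by rewrite /= !eqxx hce !orbT.
  exists (absz c + absz e)%N => N hN Y; apply: functional_extensionality => w.
  rewrite /DV !big_cons big_nil /= !DG_iii //.
  have -> : (absz c <= N)%N by lia.
  have -> : (absz e <= N)%N by lia.
  rewrite lin_one /coef /vscal /ifv /vadd /vzero.
  case: hj => ->.
    rewrite eqxx (_ : (k1 == l1) = false); last by apply/eqP => el; rewrite el ltnn in hkl.
    ring.
  rewrite eqxx (_ : (l1 == k1) = false); last by apply/eqP => el; rewrite el ltnn in hkl.
  ring.
have hc : coef != 0.
  have hc1 : (- c%:~R - e%:~R : CC) != 0 by rewrite -intrN -intrB; apply: intr_neq0_CC; lia.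
  have hc2 : (2^-1 : CC) != 0 by rewrite invr_eq0 two_neq0_CC.
  rewrite /coef; case: ifP => _; rewrite !mulf_neq0 // -intrN; apply: intr_neq0_CC; lia.
apply: SP_ext (SP_scl coef^-1 H3) _ => Y.
by rewrite /scl /= mulVf.
Qed.

End P8.


Section P9.
Variable d : nat.
Variable r : CC.
Local Notation vec := (vec d).
Local Notation gen := (gen d).
Local Notation word := (word d).
Local Notation vzero := (@vzero d).

Lemma SP_gen k (x : gen) : Claim d r k -> (2 <= d)%N -> validg x -> SP r k [:: (1, x)].
Proof.
move=> hC hd; case: x => [[[[i j] a] b]|] hv; last by apply: SP_Bp.
case: (boolP ((0 <= a) || (0 <= b))) => hab.
  apply: SP_Bp => //=; rewrite /bpn /in_Bplus /=; move: hv => /= ->; by rewrite /= hab.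
have ha : a < 0 by lia.
have hb : b < 0 by lia.
move: hv => /= /orP [hij|/andP [/eqP eij hle]]; first exact: mixed_SP.
by subst j; apply: diag_SP.
Qed.

Lemma Good_delta0 : Good r (delta (@nil gen)).
Proof.
apply: clB; left; exists [::]; apply: LMono0; apply: JJ_InJ.
by apply: cl_ext (cl0 _) _ => w; rewrite /vzero subrr.
Qed.

Lemma Claim_all k : (2 <= d)%N -> Claim d r k.
Proof.
move=> hd; elim: k => [|k IH] w vw hw.
  by case: w vw hw => // _ _; exact: Good_delta0.
case: w vw hw => [|x Y] vw hw; first exact: Good_delta0.
move: vw => /= /andP [vx vY].
have := SP_gen IH hd vx vY hw.
by rewrite lin_one; move=> H; apply: cl_ext H _ => w; rewrite /vscal mul1r.
Qed.

Lemma Good_exists (t : vec) : Good r t ->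
  exists (n : nat) (qs : nat -> seq ('I_d * 'I_d * int)) (c : nat -> CC) (u : nat -> vec),
      (forall k, (k < n)%N -> LMono r (qs k) (u k)) /\
      InJ r (fun w => t w - \sum_(k < n) c k * u k w).
Proof.
elim.
- move=> u [[qs hu]|hu].
    exists 1%N, (fun _ => qs), (fun _ => 1), (fun _ => u); split; first by move=> k _.
    apply: JJ_InJ; apply: cl_ext (cl0 _) _ => w.
    by rewrite big_ord1 mul1r /vzero subrr.
  exists 0%N, (fun _ => [::]), (fun _ => 0), (fun _ => vzero); split; first by [].
  apply: JJ_InJ; apply: cl_ext (clB hu) _ => w.
  by rewrite big_ord0 subr0.
- exists 0%N, (fun _ => [::]), (fun _ => 0), (fun _ => vzero); split; first by [].
  apply: JJ_InJ; apply: cl_ext (cl0 _) _ => w.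
  by rewrite big_ord0 subr0.
- move=> a b _ [n1 [q1 [c1 [x1 [h1 e1]]]]] _ [n2 [q2 [c2 [x2 [h2 e2]]]]].
  exists (n1 + n2)%N, (fun k => if (k < n1)%N then q1 k else q2 (k - n1)%N),
    (fun k => if (k < n1)%N then c1 k else c2 (k - n1)%N),
    (fun k => if (k < n1)%N then x1 k else x2 (k - n1)%N); split.
    move=> k hk; case: ifP => hk1; first exact: h1.
    apply: h2; lia.
  apply: JJ_InJ; apply: cl_ext (cl_add (InJ_JJ e1) (InJ_JJ e2)) _ => w.
  rewrite /vadd big_split_ord /=.
  have -> : \sum_(i < n1) (if (lshift n2 i < n1)%N then c1 (lshift n2 i) else c2 (lshift n2 i - n1)%N) *
      (if (lshift n2 i < n1)%N then x1 (lshift n2 i) else x2 (lshift n2 i - n1)%N) w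
      = \sum_(i < n1) c1 i * x1 i w.
    by apply: eq_bigr => k _; rewrite /= ltn_ord.
  have -> : \sum_(i < n2) (if (rshift n1 i < n1)%N then c1 (rshift n1 i) else c2 (rshift n1 i - n1)%N) *
      (if (rshift n1 i < n1)%N then x1 (rshift n1 i) else x2 (rshift n1 i - n1)%N) w
      = \sum_(i < n2) c2 i * x2 i w.
    by apply: eq_bigr => k _; rewrite /= ltnNge leq_addr /= addKn.
  ring.
- move=> c a _ [n [q1 [c1 [x1 [h1 e1]]]]].
  exists n, q1, (fun k => c * c1 k), x1; split; first exact: h1.
  apply: JJ_InJ; apply: cl_ext (cl_scale c (InJ_JJ e1)) _ => w.
  rewrite /vscal mulrBr mulr_sumr; congr (_ - _); apply: eq_bigr => k _; ring.
Qed.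

End P9.

Theorem proposition3p1 (d : nat) (r : CC) :
  (2 <= d)%N ->
  forall t : vec d,
    (exists s : seq (word d), forall w, t w != 0 -> w \in s) ->
    (forall w, t w != 0 -> valid_word w) ->
    exists (n : nat) (qs : nat -> seq ('I_d * 'I_d * int)) (c : nat -> CC) (u : nat -> vec d),
      (forall k, (k < n)%N -> LMono r (qs k) (u k)) /\
      InJ r (fun w => t w - \sum_(k < n) c k * u k w).
Proof.
move=> hd t [s hs] hv.
apply: Good_exists.
have G : Good r (fun w => \sum_(u <- undup s) t u * (if t u != 0 then delta u else @vzero d) w).
  apply: cl_sum_seq => u _; case: ifP => htu; last exact: cl0.
  have HG : Good r (delta u) by apply: (@Claim_all d r (size u) hd) => //; apply: hv.
  exact: HG.
apply: cl_ext G _ => w.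
have e : forall u, t u * (if t u != 0 then delta u else @vzero d) w = t u * delta u w.
  by move=> u; case: ifP => // /negbFE/eqP ->; rewrite !mul0r.
under eq_bigr => u _ do rewrite e.
case: (boolP (w \in undup s)) => hw.
  rewrite (bigD1_seq w) //= ?undup_uniq //.
  rewrite /delta eqxx mulr1 big1_seq ?addr0 // => u /andP [hu _].
  by rewrite eq_sym (negbTE hu) mulr0.
rewrite big1_seq.
  by case: (t w =P 0) => // /eqP h; move: hw; rewrite mem_undup (hs w h).
move=> u /andP [_ hu]; rewrite /delta; case: eqP => [e2|]; last by rewrite mulr0.
by subst; rewrite hu in hw.
Qed.
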